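(* Let $R$ be an associative ring with identity, $n$ a positive integer, and $0\to A\to G_{n-1}\to G_{n-2}\to\cdots\to G_0\to M\to 0$ an exact sequence of left $R$-modules with all $G_i$ Gorenstein projective. Then: (1) there exist exact sequences $0\to A\to P_{n-1}\to P_{n-2}\to\cdots\to P_0\to N\to 0$ and $0\to M\to N\to G\to 0$ of left $R$-modules with all $P_i$ projective and $G$ Gorenstein projective; in particular, a left $R$-module is an $n$-syzygy module if and only if it is a Gorenstein $n$-syzygy module; (2) there exist exact sequences $0\to B\to Q_{n-1}\to Q_{n-2}\to\cdots\to Q_0\to M\to 0$ and $0\to H\to B\to A\to 0$ of left $R$-modules with all $Q_i$ projective and $H$ Gorenstein projective.
   Context: A left $R$-module $G$ is Gorenstein projective if there is an exact sequence $\cdots\to P_1\to P_0\to P^0\to P^1\to\cdots$ of projective left $R$-modules which remains exact after applying $\operatorname{Hom}_R(-,P)$ for every projective left $R$-module $P$, and such that $G\cong \operatorname{Im}(P_0\to P^0)$. For $n\ge1$, a module $A$ is an $n$-syzygy module if there is an exact sequence $0\to A\to P_{n-1}\to\cdots\to P_0\to M\to 0$ with all $P_i$ projective, for some module $M$; it is a Gorenstein $n$-syzygy module if there is an exact sequence $0\to A\to G_{n-1}\to\cdots\to G_0\to M\to 0$ with all $G_i$ Gorenstein projective, for some module $M$. *)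

(* Defs.v *)
From HB Require Import structures.
From mathcomp Require Import all_boot all_order all_algebra.
Unset Printing Implicit Defensive.
Import Order.TTheory GRing.Theory Num.Theory.
Local Open Scope ring_scope.

Definition surj {U V : Type} (f : U -> V) : Prop := forall v, exists u, f u = v.

Definition short_exact {R : pzRingType} {X Y Z : lmodType R}
  (f : {linear X -> Y}) (g : {linear Y -> Z}) : Prop :=
  [/\ injective f, (forall y, g y = 0 <-> exists x, f x = y) & surj g].

Definition projective {R : pzRingType} (P : lmodType R) : Prop :=
  forall (V W : lmodType R) (p : {linear V -> W}) (f : {linear P -> W}),
    surj p -> exists g : {linear P -> V}, forall x, p (g x) = f x.

(* Gorenstein projective: a complete resolution ... -> P i -> P (i+1) -> ...
   of projectives (indexed by int; P_0 = P 0, P^0 = P 1), exact, remaining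
   exact under Hom(-,Q) for every projective Q, with G ≅ Im(P 0 -> P 1). *)
Definition gorenstein_projective {R : pzRingType} (G : lmodType R) : Prop :=
  exists (P : int -> lmodType R) (d : forall i : int, {linear P i -> P (i + 1)}),
    [/\ (forall i, projective (P i)),
        (forall (i : int) (y : P (i + 1)), d (i + 1) y = 0 <-> exists x, d i x = y),
        (forall (Q : lmodType R), projective Q ->
           forall (i : int) (f : {linear P (i + 1) -> Q}),
             (forall x, f (d i x) = 0) ->
             exists g : {linear P (i + 1 + 1) -> Q}, forall y, g (d (i + 1) y) = f y) &
        exists iota : {linear G -> P (0 + 1)},
          injective iota /\ forall y, (exists g, iota g = y) <-> (exists x, d 0 x = y)].

(* Exact sequence 0 -> A --a--> Y n --e n--> Y (n-1) -> ... --e 1--> Y 0 -> 0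
   (A external; Y 0 is the right end M; Y (i+1) is the i-th middle term,
   required to satisfy C for 1 <= i <= n). *)
Definition lexact {R : pzRingType} (C : lmodType R -> Prop) (n : nat)
  (A : lmodType R) (Y : nat -> lmodType R) (e : forall i, {linear Y i -> Y i.-1})
  (a : {linear A -> Y n}) : Prop :=
  [/\ injective a,
      (forall y : Y n, e n y = 0 <-> exists x, a x = y),
      (forall i, (0 < i < n)%N -> forall y : Y i, e i y = 0 <-> exists z : Y i.+1, e i.+1 z = y),
      surj (e 1%N) &
      (forall i, (0 < i <= n)%N -> C (Y i))].

(* Exact sequence 0 -> W n --f n--> W (n-1) -> ... -> W 0 --p--> M -> 0
   (M external; W n is the left end B; W i must satisfy C for i < n). *)
Definition rexact {R : pzRingType} (C : lmodType R -> Prop) (n : nat)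
  (M : lmodType R) (W : nat -> lmodType R) (f : forall i, {linear W i -> W i.-1})
  (p : {linear W 0%N -> M}) : Prop :=
  [/\ injective (f n),
      (forall i, (0 < i < n)%N -> forall y : W i, f i y = 0 <-> exists z : W i.+1, f i.+1 z = y),
      (forall y : W 0%N, p y = 0 <-> exists z : W 1%N, f 1%N z = y),
      surj p &
      (forall i, (i < n)%N -> C (W i))].

Definition syzygy {R : pzRingType} (n : nat) (A : lmodType R) : Prop :=
  exists (Y : nat -> lmodType R) (e : forall i, {linear Y i -> Y i.-1}) (a : {linear A -> Y n}),
    @lexact R (@projective R) n A Y e a.

Definition gorenstein_syzygy {R : pzRingType} (n : nat) (A : lmodType R) : Prop :=
  exists (Y : nat -> lmodType R) (e : forall i, {linear Y i -> Y i.-1}) (a : {linear A -> Y n}),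
    @lexact R (@gorenstein_projective R) n A Y e a.

(* Main.v *)
Require Import Defs.
From HB Require Import structures.
From Stdlib Require Import ClassicalEpsilon FunctionalExtensionality PropExtensionality.
From mathcomp Require Import all_boot all_order all_algebra.
Import GRing.Theory.
Local Open Scope ring_scope.
Set Warnings "-notation-overridden,-ambiguous-paths,-redundant-canonical-projection".

Definition pb (P : Prop) : bool := if excluded_middle_informative P then true else false.
Lemma pbP (P : Prop) : reflect P (pb P).
Proof. rewrite /pb; case: excluded_middle_informative => H; constructor => //. Qed.

Section MkL.
Variables (R : pzRingType) (U V : lmodType R) (f : U -> V) (lf : linear f).
Definition mkL : {linear U -> V} := HB.pack f (GRing.isLinear.Build R U V *:%R f lf).
Lemma mkLE x : mkL x = f x. Proof. by []. Qed.
End MkL.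
Arguments mkL {R U V} f lf.

Section Sub.
Variables (R : pzRingType) (V : lmodType R) (Sp : V -> Prop).
Hypotheses (S0 : Sp 0) (SD : forall x y, Sp x -> Sp y -> Sp (x + y))
  (SN : forall x, Sp x -> Sp (- x)) (SZ : forall a x, Sp x -> Sp (a *: x)).
Definition subT := {x : V | pb (Sp x)}.
HB.instance Definition _ := Choice.on subT.
Definition sv (x : subT) : V := proj1_sig x.
Definition mk {x : V} (h : Sp x) : subT := exist _ x (introT (pbP _) h).
Definition sp (x : subT) : Sp (sv x) := elimT (pbP _) (proj2_sig x).
Definition sub_zero : subT := mk S0.
Definition sub_add (x y : subT) : subT := mk (SD _ _ (sp x) (sp y)).
Definition sub_opp (x : subT) : subT := mk (SN _ (sp x)).
Definition sub_scale a (x : subT) : subT := mk (SZ a _ (sp x)).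
Lemma sv_inj : injective sv. Proof. exact: val_inj. Qed.
Fact sub_addA : associative sub_add. Proof. by move=> x y z; apply: sv_inj; rewrite /= addrA. Qed.
Fact sub_addC : commutative sub_add. Proof. by move=> x y; apply: sv_inj; rewrite /= addrC. Qed.
Fact sub_add0 : left_id sub_zero sub_add. Proof. by move=> x; apply: sv_inj; rewrite /= add0r. Qed.
Fact sub_addN : left_inverse sub_zero sub_opp sub_add. Proof. by move=> x; apply: sv_inj; rewrite /= addNr. Qed.
HB.instance Definition _ := GRing.isZmodule.Build subT sub_addA sub_addC sub_add0 sub_addN.
Fact sub_scaleA a b (v : subT) : sub_scale a (sub_scale b v) = sub_scale (a * b) v.
Proof. by apply: sv_inj; rewrite /= scalerA. Qed.
Fact sub_scale1 : left_id 1 sub_scale. Proof. by move=> x; apply: sv_inj; rewrite /= scale1r. Qed.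
Fact sub_scaleDr : right_distributive sub_scale +%R. Proof. by move=> a x y; apply: sv_inj; rewrite /= scalerDr. Qed.
Fact sub_scaleDl (v : subT) : {morph sub_scale^~ v: a b / a + b}. Proof. by move=> a b; apply: sv_inj; rewrite /= scalerDl. Qed.
HB.instance Definition _ := GRing.Zmodule_isLmodule.Build R subT sub_scaleA sub_scale1 sub_scaleDr sub_scaleDl.
Lemma sub_exists : exists (U : lmodType R) (i : {linear U -> V}), injective i /\ forall y, (exists x, i x = y) <-> Sp y.
Proof.
have li : linear (sv : subT -> V) by [].
exists subT, (mkL _ li); split => /=.
  exact: sv_inj.
move=> y; split; first by case=> x <-; exact: sp.
by move=> h; exists (mk h).
Qed.
End Sub.

Section Quot.
Variables (R : pzRingType) (V : lmodType R) (Sp : V -> Prop).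
Hypotheses (S0 : Sp 0) (SD : forall x y, Sp x -> Sp y -> Sp (x + y))
  (SN : forall x, Sp x -> Sp (- x)) (SZ : forall a x, Sp x -> Sp (a *: x)).
Definition eqv x y := Sp (x - y).
Lemma eqv_refl x : eqv x x. Proof. by rewrite /eqv subrr. Qed.
Lemma eqv_sym {x y} : eqv x y -> eqv y x. Proof. by move=> h; have := SN _ h; rewrite opprB. Qed.
Lemma eqv_trans {x y z} : eqv x y -> eqv y z -> eqv x z.
Proof. by move=> h1 h2; have := SD _ _ h1 h2; rewrite /eqv addrA subrK. Qed.
Lemma eqv_add {x x' y y'} : eqv x x' -> eqv y y' -> eqv (x + y) (x' + y').
Proof. by move=> h1 h2; have := SD _ _ h1 h2; rewrite /eqv opprD addrACA. Qed.
Lemma eqv_opp {x y} : eqv x y -> eqv (- x) (- y).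
Proof. by move=> h; have := SN _ h; rewrite /eqv opprD. Qed.
Lemma eqv_scale a {x y} : eqv x y -> eqv (a *: x) (a *: y).
Proof. by move=> h; have := SZ a _ h; rewrite /eqv scalerBr. Qed.
Lemma eqv_eq {x y} : x = y -> eqv x y. Proof. by move=> ->; apply: eqv_refl. Qed.
Definition canon (x : V) : V := epsilon (inhabits 0) (fun y => Sp (x - y)).
Lemma canonP x : Sp (x - canon x).
Proof. apply: (epsilon_spec (inhabits 0) (fun y => Sp (x - y))); exists x; by rewrite subrr. Qed.
Lemma SB x y : Sp x -> Sp y -> Sp (x - y). Proof. by move=> hx hy; apply: SD => //; apply: SN. Qed.
Lemma canon_eq {x x'} : Sp (x - x') -> canon x = canon x'.
Proof.
move=> h; rewrite /canon; congr epsilon; apply: functional_extensionality => y.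
apply: propositional_extensionality; split => hy.
  by apply: (@eqv_trans x' x y) => //; apply: eqv_sym.
by apply: (@eqv_trans x x' y).
Qed.
Lemma canon_id x : canon (canon x) = canon x.
Proof. apply: canon_eq; have := SN _ (canonP x); by rewrite opprB. Qed.
Definition quotT := {x : V | canon x == x}.
HB.instance Definition _ := Choice.on quotT.
Definition qv (x : quotT) : V := proj1_sig x.
Definition qpi (x : V) : quotT := exist _ (canon x) (introT eqP (canon_id x)).
Lemma qv_inj : injective qv. Proof. exact: val_inj. Qed.
Lemma qpi_qv q : qpi (qv q) = q.
Proof. apply: qv_inj; rewrite /=; by case: q => x /= /eqP. Qed.
Lemma qpi_eq {x y} : Sp (x - y) -> qpi x = qpi y.
Proof. by move=> h; apply: qv_inj; rewrite /= (canon_eq h). Qed.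
Lemma qpi_eqP {x y} : qpi x = qpi y -> Sp (x - y).
Proof.
move=> /(congr1 qv) /= e.
have -> : x - y = (x - canon x) - (y - canon y) by rewrite e opprB addrA subrK.
by apply: SB; apply: canonP.
Qed.
Lemma Sp_qv x : Sp (qv (qpi x) - x).
Proof. by have := SN _ (canonP x); rewrite opprB. Qed.
Lemma eqv_qv x : eqv (qv (qpi x)) x. Proof. exact: Sp_qv. Qed.
Definition q_zero : quotT := qpi 0.
Definition q_add (x y : quotT) : quotT := qpi (qv x + qv y).
Definition q_opp (x : quotT) : quotT := qpi (- qv x).
Definition q_scale a (x : quotT) : quotT := qpi (a *: qv x).
Fact q_addA : associative q_add.
Proof.
move=> x y z; rewrite /q_add; apply: qpi_eq.
apply: (eqv_trans (eqv_add (eqv_refl _) (eqv_qv _))).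
apply: eqv_sym; apply: (eqv_trans (eqv_add (eqv_qv _) (eqv_refl _))).
by apply: eqv_eq; rewrite addrA.
Qed.
Fact q_addC : commutative q_add.
Proof. by move=> x y; rewrite /q_add addrC. Qed.
Fact q_add0 : left_id q_zero q_add.
Proof.
move=> x; rewrite /q_add -[RHS]qpi_qv; apply: qpi_eq.
by apply: (eqv_trans (eqv_add (eqv_qv _) (eqv_refl _))); apply: eqv_eq; rewrite add0r.
Qed.
Fact q_addN : left_inverse q_zero q_opp q_add.
Proof.
move=> x; rewrite /q_add; apply: qpi_eq.
by apply: (eqv_trans (eqv_add (eqv_qv _) (eqv_refl _))); apply: eqv_eq; rewrite addNr.
Qed.
HB.instance Definition _ := GRing.isZmodule.Build quotT q_addA q_addC q_add0 q_addN.
Fact q_scaleA a b (v : quotT) : q_scale a (q_scale b v) = q_scale (a * b) v.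
Proof.
rewrite /q_scale; apply: qpi_eq.
by apply: (eqv_trans (eqv_scale _ (eqv_qv _))); apply: eqv_eq; rewrite scalerA.
Qed.
Fact q_scale1 : left_id 1 q_scale.
Proof. by move=> x; rewrite /q_scale scale1r qpi_qv. Qed.
Fact q_scaleDr : right_distributive q_scale +%R.
Proof.
move=> a x y; rewrite /q_scale /= /q_add; apply: qpi_eq.
apply: (eqv_trans (eqv_scale _ (eqv_qv _))).
apply: eqv_sym; apply: (eqv_trans (eqv_add (eqv_qv _) (eqv_qv _))).
by apply: eqv_eq; rewrite scalerDr.
Qed.
Fact q_scaleDl (v : quotT) : {morph q_scale^~ v: a b / a + b}.
Proof.
move=> a b; rewrite /q_scale /= /q_add; apply: qpi_eq.
apply: eqv_sym; apply: (eqv_trans (eqv_add (eqv_qv _) (eqv_qv _))).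
by apply: eqv_eq; rewrite scalerDl.
Qed.
HB.instance Definition _ := GRing.Zmodule_isLmodule.Build R quotT q_scaleA q_scale1 q_scaleDr q_scaleDl.
Fact qpi_linear : linear (qpi : V -> quotT).
Proof.
move=> a x y; apply: qpi_eq.
apply: eqv_sym; apply: (eqv_trans (eqv_add (eqv_qv _) (eqv_qv _))).
apply: eqv_add; last exact: eqv_refl.
apply: eqv_scale; exact: eqv_qv.
Qed.
Lemma quot_exists : exists (Q : lmodType R) (p : {linear V -> Q}),
  (forall q, exists x, p x = q) /\ forall x, p x = 0 <-> Sp x.
Proof.
exists quotT, (mkL _ qpi_linear); split => /=.
  by move=> q; exists (qv q); rewrite qpi_qv.
move=> x; split => h.
  by have := qpi_eqP h; rewrite /eqv subr0.
by apply: qpi_eq; rewrite subr0.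
Qed.
End Quot.

Section Gen.
Context {R : pzRingType}.
Implicit Types U V W : lmodType R.

Lemma factor_surj {U V W} (p : {linear U -> V}) (f : {linear U -> W}) :
  surj p -> (forall x, p x = 0 -> f x = 0) -> exists g : {linear V -> W}, forall x, g (p x) = f x.
Proof.
move=> sp hk.
pose pre (v : V) : U := epsilon (inhabits 0) (fun x => p x = v).
have preP v : p (pre v) = v.
  by rewrite /pre; apply: (epsilon_spec (inhabits 0) (fun x => p x = v)); exact: sp.
have feq x y : p x = p y -> f x = f y.
  move=> e; apply/eqP; rewrite -subr_eq0 -linearB; apply/eqP/hk; by rewrite linearB e subrr.
have lg : linear (fun v => f (pre v)).
  by move=> a u v /=; rewrite -linearP; apply: feq; rewrite !linearP !preP.
by exists (mkL _ lg) => x /=; apply: feq; exact: preP.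
Qed.

Lemma factor_inj {U V W} (i : {linear U -> V}) (f : {linear W -> V}) :
  injective i -> (forall w, exists u, i u = f w) -> exists g : {linear W -> U}, forall w, i (g w) = f w.
Proof.
move=> ii hf.
pose g (w : W) : U := epsilon (inhabits 0) (fun u => i u = f w).
have gP w : i (g w) = f w.
  by rewrite /g; apply: (epsilon_spec (inhabits 0) (fun u => i u = f w)); exact: hf.
have lg : linear g by move=> a u v; apply: ii; rewrite linearP !gP linearP.
by exists (mkL _ lg) => w /=; exact: gP.
Qed.

Lemma lin_pair {U V W} (f : {linear U -> V}) (g : {linear U -> W}) :
  exists h : {linear U -> (V * W)%type}, forall x, h x = (f x, g x).
Proof.
have lh : linear (fun x => (f x, g x)) by move=> a x y; rewrite !linearP.
by exists (mkL _ lh).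
Qed.

Lemma lin_copair {U V W} (f : {linear U -> W}) (g : {linear V -> W}) :
  exists h : {linear (U * V)%type -> W}, forall x, h x = f x.1 + g x.2.
Proof.
have lh : linear (fun x : U * V => f x.1 + g x.2).
  by move=> a x y /=; rewrite !linearP scalerDr addrACA.
by exists (mkL _ lh).
Qed.

Lemma lin_fst U V : exists h : {linear (U * V)%type -> U}, forall x, h x = x.1.
Proof. have lh : linear (fun x : U * V => x.1) by []. by exists (mkL _ lh). Qed.
Lemma lin_snd U V : exists h : {linear (U * V)%type -> V}, forall x, h x = x.2.
Proof. have lh : linear (fun x : U * V => x.2) by []. by exists (mkL _ lh). Qed.
Lemma lin_zero U V : exists h : {linear U -> V}, forall x, h x = 0.
Proof. have lh : linear (fun x : U => 0 : V) by move=> a x y; rewrite scaler0 addr0. by exists (mkL _ lh). Qed.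
Lemma lin_id U : exists h : {linear U -> U}, forall x, h x = x.
Proof. have lh : linear (fun x : U => x) by []. by exists (mkL _ lh). Qed.
Lemma lin_comp {U V W} (f : {linear U -> V}) (g : {linear V -> W}) :
  exists h : {linear U -> W}, forall x, h x = g (f x).
Proof. have lh : linear (fun x => g (f x)) by move=> a x y; rewrite !linearP. by exists (mkL _ lh). Qed.
Lemma lin_add {U V} (f g : {linear U -> V}) : exists h : {linear U -> V}, forall x, h x = f x + g x.
Proof. have lh : linear (fun x => f x + g x) by move=> a x y; rewrite !linearP scalerDr addrACA. by exists (mkL _ lh). Qed.
Lemma lin_opp {U V} (f : {linear U -> V}) : exists h : {linear U -> V}, forall x, h x = - f x.
Proof. have lh : linear (fun x => - f x) by move=> a x y /=; rewrite linearP opprD scalerN. by exists (mkL _ lh). Qed.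

Lemma lin_inl U V : exists h : {linear U -> (U * V)%type}, forall x, h x = (x, 0).
Proof.
have [i hi] := lin_id U; have [z hz] := lin_zero U V; have [h hh] := lin_pair i z.
by exists h => x; rewrite hh hi hz.
Qed.
Lemma lin_inr U V : exists h : {linear V -> (U * V)%type}, forall x, h x = (0, x).
Proof.
have [i hi] := lin_id V; have [z hz] := lin_zero V U; have [h hh] := lin_pair z i.
by exists h => x; rewrite hh hi hz.
Qed.
Lemma ker_exists {V W} (f : {linear V -> W}) :
  exists (K : lmodType R) (k : {linear K -> V}), injective k /\ forall y, (exists x, k x = y) <-> f y = 0.
Proof.
apply: (@sub_exists _ _ (fun y => f y = 0)).
- exact: linear0.
- by move=> x y hx hy; rewrite linearD hx hy addr0.
- by move=> x hx; rewrite linearN hx oppr0.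
- by move=> a x hx; rewrite linearZZ hx scaler0.
Qed.

Lemma im_exists {V W} (f : {linear V -> W}) :
  exists (K : lmodType R) (k : {linear K -> W}), injective k /\ forall y, (exists x, k x = y) <-> exists x, f x = y.
Proof.
apply: (@sub_exists _ _ (fun y => exists x, f x = y)).
- by exists 0; rewrite linear0.
- by move=> x y [u <-] [v <-]; exists (u + v); rewrite linearD.
- by move=> x [u <-]; exists (- u); rewrite linearN.
- by move=> a x [u <-]; exists (a *: u); rewrite linearZZ.
Qed.

Lemma coker_exists {U V} (f : {linear U -> V}) :
  exists (Q : lmodType R) (p : {linear V -> Q}), surj p /\ forall y, p y = 0 <-> exists x, f x = y.
Proof.
apply: (@quot_exists _ _ (fun y => exists x, f x = y)).
- by exists 0; rewrite linear0.
- by move=> x y [u <-] [v <-]; exists (u + v); rewrite linearD.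
- by move=> x [u <-]; exists (- u); rewrite linearN.
- by move=> a x [u <-]; exists (a *: u); rewrite linearZZ.
Qed.

Lemma zero_exists V : exists Z : lmodType R, forall z : Z, z = 0.
Proof.
have [i hi] := lin_id V.
have [K [k [ik hk]]] := ker_exists i.
exists K => z; apply: ik; rewrite linear0; have : exists x, k x = k z by exists z.
by move/hk; rewrite hi.
Qed.

End Gen.

Section Core.
Context {R : pzRingType}.
Implicit Types U V W P A X B K Q C Y : lmodType R.


Definition extvan (C : lmodType R) : Prop :=
  forall (U V : lmodType R) (f : {linear U -> V}) (g : {linear V -> C}), short_exact f g ->
  forall T : lmodType R, projective T -> forall h : {linear U -> T},
  exists h' : {linear V -> T}, forall x, h' (f x) = h x.

Definition GPinv (S : lmodType R -> Prop) : Prop := forall K, S K -> [/\ extvan K,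
  (exists (K' Q : lmodType R) (i : {linear K' -> Q}) (p : {linear Q -> K}),
      [/\ projective Q, short_exact i p & S K']) &
  (exists (Q C' : lmodType R) (i : {linear K -> Q}) (p : {linear Q -> C'}),
      [/\ projective Q, short_exact i p & S C'])].

Definition GPc (G : lmodType R) : Prop := exists S, GPinv S /\ S G.

Lemma inj0 {U V} {f : {linear U -> V}} {x} : injective f -> f x = 0 -> x = 0.
Proof. by move=> fi e; apply: fi; rewrite e linear0. Qed.

Lemma inj_lin {U V} (f : {linear U -> V}) : (forall x, f x = 0 -> x = 0) -> injective f.
Proof. move=> h x y e; apply/eqP; rewrite -subr_eq0; apply/eqP/h; by rewrite linearB e subrr. Qed.

Lemma ses_comp0 {U V W} {f : {linear U -> V}} {g : {linear V -> W}} (x : U) : short_exact f g -> g (f x) = 0.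
Proof. by case=> _ hk _; apply/hk; exists x. Qed.

Lemma proj_prod (P1 P2 : lmodType R) : projective P1 -> projective P2 -> projective (P1 * P2)%type.
Proof.
move=> h1 h2 V W p f sp.
have [l hl] := lin_inl P1 P2; have [r hr] := lin_inr P1 P2.
have [f1 hf1] := lin_comp l f; have [f2 hf2] := lin_comp r f.
have [g1 hg1] := h1 V W p f1 sp; have [g2 hg2] := h2 V W p f2 sp.
have [g hg] := lin_copair g1 g2.
exists g => x; rewrite hg linearD hg1 hg2 hf1 hf2 hl hr -linearD.
by case: x => a b /=; congr (f _); rewrite /GRing.add /=; congr (_, _); rewrite ?addr0 ?add0r.
Qed.

Lemma proj_zero (Z : lmodType R) : (forall z : Z, z = 0) -> projective Z.
Proof.
move=> hz V W p f sp; have [g hg] := lin_zero Z V.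
by exists g => x; rewrite hg linear0 (hz x) linear0.
Qed.

Lemma proj_extvan P : projective P -> extvan P.
Proof.
move=> pP U V f g [fi fk fs] T pT h.
have [i hi] := lin_id P.
have [s hs] := pP V P g i fs.
have [sg hsg] := lin_comp g s.
have [nsg hnsg] := lin_opp sg.
have [iv hiv] := lin_id V.
have [phi hphi] := lin_add iv nsg.
have [r hr] : exists r : {linear V -> U}, forall v, f (r v) = phi v.
  apply: factor_inj => // v; apply/fk.
  by rewrite hphi hiv hnsg hsg linearB hs hi subrr.
have [h' hh'] := lin_comp r h.
exists h' => x; rewrite hh'; congr (h _); apply: (fi).
by rewrite hr hphi hiv hnsg hsg (ses_comp0 x (And3 fi fk fs)) linear0 subr0.
Qed.


Lemma pair_subE {U V} (a c : U) (b d : V) : ((a, b) - (c, d) : (U * V)%type) = (a - c, b - d).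
Proof. by []. Qed.
Lemma pair_addE {U V} (a c : U) (b d : V) : ((a, b) + (c, d) : (U * V)%type) = (a + c, b + d).
Proof. by []. Qed.
Lemma pair_oppE {U V} (a : U) (b : V) : (- (a, b) : (U * V)%type) = (- a, - b).
Proof. by []. Qed.

Lemma extvan_ext {A X B} {u : {linear A -> X}} {v : {linear X -> B}} :
  short_exact u v -> extvan A -> extvan B -> extvan X.
Proof.
move=> [ui uk us] eA eB U V f g [fi fk fs] T pT h.
have sfg : short_exact f g by [].
have suv : short_exact u v by [].
have [vg hvg] := lin_comp g v.
have [U' [k [ki kk]]] := ker_exists vg.
have [f1 hf1] : exists f1 : {linear U -> U'}, forall x, k (f1 x) = f x.
  apply: factor_inj => // x; apply/kk; by rewrite hvg (ses_comp0 x sfg) linear0.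
have [gk hgk] := lin_comp k g.
have [g1 hg1] : exists g1 : {linear U' -> A}, forall z, u (g1 z) = gk z.
  apply: factor_inj => // z; apply/uk; rewrite hgk.
  have : exists x, k x = k z by exists z.
  by move/kk; rewrite hvg.
have ses1 : short_exact f1 g1.
  split.
  - by move=> x y e; apply: (fi); rewrite -!hf1 e.
  - move=> z; split.
    + move=> e; have : g (k z) = 0 by rewrite -hgk -hg1 e linear0.
      move/fk => [x hx]; exists x; apply: (ki); by rewrite hf1.
    + move=> [x <-]; apply: (ui); rewrite hg1 hgk hf1 linear0.
      exact: ses_comp0 sfg.
  - move=> a; have [y hy] := fs (u a).
    have : exists z, k z = y by apply/kk; rewrite hvg hy (ses_comp0 a suv).
    by case=> z hz; exists z; apply: (ui); rewrite hg1 hgk hz.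
have [h1 hh1] := eA _ _ f1 g1 ses1 T pT h.
have ses2 : short_exact k vg.
  split => //.
  - by move=> y; split => /kk.
  - by move=> b; have [x hx] := us b; have [y hy] := fs x; exists y; rewrite hvg hy.
have [h2 hh2] := eB _ _ k vg ses2 T pT h1.
by exists h2 => x; rewrite -hf1 hh2 hh1.
Qed.

Lemma extvan_of_left {K Q C} {i : {linear K -> Q}} {p : {linear Q -> C}} :
  short_exact i p -> projective Q ->
  (forall T, projective T -> forall h : {linear K -> T},
     exists g : {linear Q -> T}, forall x, g (i x) = h x) -> extvan C.
Proof.
move=> [ii ik ps] pQ rp U V f g [fi fk fs] T pT h.
have sfg : short_exact f g by [].
have sip : short_exact i p by [].
have [lam hlam] := pQ V C g p fs.
have [li hli] := lin_comp i lam.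
have [mu hmu] : exists mu : {linear K -> U}, forall k, f (mu k) = li k.
  apply: factor_inj => // k; apply/fk; by rewrite hli hlam (ses_comp0 k sip).
have [hm hhm] := lin_comp mu h.
have [psi hpsi] := rp T pT hm.
have [Phi hPhi] := lin_copair f lam.
have [Psi hPsi] := lin_copair h psi.
have sPhi : surj Phi.
  move=> v; have [q hq] := ps (g v).
  have : g (v - lam q) = 0 by rewrite linearB hlam hq subrr.
  move/fk => [x hx]; exists (x, q); by rewrite hPhi /= hx subrK.
have [h' hh'] : exists h' : {linear V -> T}, forall z, h' (Phi z) = Psi z.
  apply: factor_surj => // z; rewrite hPhi hPsi => e.
  have pq : p z.2 = 0.
    rewrite -hlam; have := congr1 g e; by rewrite linear0 linearD (ses_comp0 _ sfg) add0r.
  have [k hk] := (ik _).1 pq.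
  have : f (z.1 + mu k) = 0 by rewrite linearD hmu hli hk.
  move/(inj0 fi) => e2.
  have -> : z.1 = - mu k by apply/eqP; rewrite -addr_eq0 e2.
  by rewrite -hk hpsi hhm linearN addNr.
exists h' => x; have := hh' (x, 0); by rewrite hPhi hPsi /= !linear0 !addr0.
Qed.

Lemma horse_left {A X B} {u : {linear A -> X}} {v : {linear X -> B}} {KA QA KB QB : lmodType R}
  {iA : {linear KA -> QA}} {pA : {linear QA -> A}} {iB : {linear KB -> QB}} {pB : {linear QB -> B}} :
  short_exact u v -> short_exact iA pA -> short_exact iB pB -> projective QB ->
  exists (KX : lmodType R) (iX : {linear KX -> (QA * QB)%type}) (pX : {linear (QA * QB)%type -> X})
    (uK : {linear KA -> KX}) (vK : {linear KX -> KB}), short_exact iX pX /\ short_exact uK vK.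
Proof.
move=> suv sa sb pQB.
case: (suv) => ui uk us; case: (sa) => ai ak as_; case: (sb) => bi bk bs.
have [lam hlam] := pQB X B v pB us.
have [uA huA] := lin_comp pA u.
have [pX hpX] := lin_copair uA lam.
have [KX [iX [iXi iXk]]] := ker_exists pX.
have [l hl] := lin_inl QA QB.
have [il hil] := lin_comp iA l.
have [uK huK] : exists uK : {linear KA -> KX}, forall k, iX (uK k) = il k.
  apply: factor_inj => // k; apply/iXk; rewrite hpX hil hl /= huA linear0 addr0.
  by rewrite (ses_comp0 k sa) linear0.
have [sn hsn] := lin_snd QA QB.
have [s2 hs2] := lin_comp iX sn.
have pXz z : pX (iX z) = 0 by apply/iXk; exists z.
have [vK hvK] : exists vK : {linear KX -> KB}, forall z, iB (vK z) = s2 z.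
  apply: factor_inj => // z; apply/bk; rewrite hs2 hsn -hlam.
  have := pXz z; rewrite hpX huA => e.
  have -> : lam (iX z).2 = - u (pA (iX z).1) by apply/eqP; rewrite -addr_eq0 addrC e.
  by rewrite linearN (ses_comp0 _ suv) oppr0.
exists KX, iX, pX, uK, vK; split.
- split => //.
  + by move=> y; split => /iXk.
  + move=> x; have [q hq] := bs (v x).
    have : v (x - lam q) = 0 by rewrite linearB hlam hq subrr.
    move/uk => [a ha]; have [qa hqa] := as_ a.
    by exists (qa, q); rewrite hpX huA /= hqa ha subrK.
- split.
  + move=> k1 k2 e; apply: (ai); have := congr1 iX e; rewrite !huK !hil !hl.
    by move/(congr1 fst).
  + move=> z; split.
    * move=> e; have e2 : (iX z).2 = 0 by rewrite -hsn -hs2 -hvK e linear0.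
      have := pXz z; rewrite hpX huA e2 linear0 addr0 => /(inj0 ui) /ak [k hk].
      exists k; apply: (iXi); rewrite huK hil hl hk.
      by case: (iX z) e2 => a b /= ->.
    * by move=> [k <-]; apply: (bi); rewrite hvK hs2 hsn huK hil hl linear0.
  + move=> kb; have e0 : v (lam (iB kb)) = 0 by rewrite hlam (ses_comp0 _ sb).
    move/uk: e0 => [a ha]; have [qa hqa] := as_ a.
    have : pX (- qa, iB kb) = 0 by rewrite hpX huA /= !linearN hqa ha addNr.
    move/iXk => [z hz]; exists z; apply: (bi); by rewrite hvK hs2 hsn hz.
Qed.

Lemma horse_right {A X B} {u : {linear A -> X}} {v : {linear X -> B}} {QA CA QB CB : lmodType R}
  {iA : {linear A -> QA}} {pA : {linear QA -> CA}} {iB : {linear B -> QB}} {pB : {linear QB -> CB}} :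
  short_exact u v -> short_exact iA pA -> short_exact iB pB -> projective QA -> extvan B ->
  exists (CX : lmodType R) (iX : {linear X -> (QA * QB)%type}) (pX : {linear (QA * QB)%type -> CX})
    (uC : {linear CA -> CX}) (vC : {linear CX -> CB}), short_exact iX pX /\ short_exact uC vC.
Proof.
move=> suv sa sb pQA eB.
case: (suv) => ui uk us; case: (sa) => ai ak as_; case: (sb) => bi bk bs.
have [phi hphi] := eB _ _ u v suv QA pQA iA.
have [bv hbv] := lin_comp v iB.
have [iX hiX] := lin_pair phi bv.
have [CX [pX [pXs pXk]]] := coker_exists iX.
have [l hl] := lin_inl QA QB.
have [pl hpl] := lin_comp l pX.
have [uC huC] : exists uC : {linear CA -> CX}, forall q, uC (pA q) = pl q.
  apply: factor_surj => // q /ak [a <-]; rewrite hpl hl.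
  by apply/pXk; exists (u a); rewrite hiX hbv hphi (ses_comp0 a suv) linear0.
have [sn hsn] := lin_snd QA QB.
have [ps hps] := lin_comp sn pB.
have [vC hvC] : exists vC : {linear CX -> CB}, forall y, vC (pX y) = ps y.
  apply: factor_surj => // y /pXk [x <-].
  by rewrite hps hsn hiX hbv /= (ses_comp0 _ sb).
exists CX, iX, pX, uC, vC; split.
- split => //.
  + apply: inj_lin => x; rewrite hiX hbv => e.
    have e1 : phi x = 0 := congr1 fst e.
    have e2 : iB (v x) = 0 := congr1 snd e.
    have /uk [a ha] : v x = 0 := inj0 bi e2.
    have : iA a = 0 by rewrite -hphi ha.
    by move/(inj0 ai) => a0; rewrite -ha a0 linear0.
- split.
  + apply: inj_lin => c; have [q <-] := as_ c; rewrite huC hpl hl => /pXk [x hx].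
    have e2 : iB (v x) = 0 by have := congr1 snd hx; rewrite hiX hbv.
    have /uk [a ha] := inj0 bi e2.
    have e1 : q = iA a by have := congr1 fst hx; rewrite hiX -ha hphi.
    by rewrite e1 (ses_comp0 a sa).
  + move=> c; split.
    * have [y <-] := pXs c; rewrite hvC hps hsn => /bk [b hb]; have [x hx] := us b.
      exists (pA (y.1 - phi x)); rewrite huC hpl hl.
      apply/eqP; rewrite -subr_eq0 -linearB; apply/eqP/pXk; exists (- x).
      rewrite hiX hbv !linearN hx hb; case: y hb => y1 y2 /= hb.
        by rewrite pair_subE sub0r addrAC subrr add0r.
    * by move=> [c' <-]; have [q <-] := as_ c'; rewrite huC hpl hl hvC hps hsn /= linear0.
  + move=> cb; have [q <-] := bs cb; have [r hr] := lin_inr QA QB.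
    by exists (pX (r q)); rewrite hvC hps hsn hr.
Qed.

Lemma GPc_ext {A X B} {u : {linear A -> X}} {v : {linear X -> B}} :
  short_exact u v -> GPc A -> GPc B -> GPc X.
Proof.
move=> suv [SA [HA sA]] [SB [HB sB]].
exists (fun Y => exists (A' B' : lmodType R) (u' : {linear A' -> Y}) (v' : {linear Y -> B'}),
   [/\ short_exact u' v', SA A' & SB B']).
split; last by exists A, B, u, v.
move=> Y [A' [B' [u' [v' [s' hA' hB']]]]].
have [eA [KA [QA [iA [pA [pa sa hKA]]]]] [QA' [CA [iA' [pA' [pa' sa' hCA]]]]]] := HA _ hA'.
have [eB [KB [QB [iB [pB [pb sb hKB]]]]] [QB' [CB [iB' [pB' [pb' sb' hCB]]]]]] := HB _ hB'.
split.
- exact: extvan_ext s' eA eB.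
- have [KX [iX [pX [uK [vK [s1 s2]]]]]] := horse_left s' sa sb pb.
  exists KX, (QA * QB)%type, iX, pX; split => //; first exact: proj_prod.
  by exists KA, KB, uK, vK.
- have [CX [iX [pX [uC [vC [s1 s2]]]]]] := horse_right s' sa' sb' pa' eB.
  exists (QA' * QB')%type, CX, iX, pX; split => //; first exact: proj_prod.
  by exists CA, CB, uC, vC.
Qed.

Lemma proj_GPc P : projective P -> GPc P.
Proof.
move=> pP; exists (@projective R); split => // K pK; split.
- exact: proj_extvan.
- have [Z hZ] := zero_exists K; have [z hz] := lin_zero Z K; have [i hi] := lin_id K.
  exists Z, K, z, i; split => //; last exact: proj_zero.
  split.
  + by move=> a b _; rewrite (hZ a) (hZ b).
  + move=> y; rewrite hi; split; first by move=> ->; exists 0; rewrite hz.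
    by move=> [x <-]; rewrite hz.
  + by move=> y; exists y; rewrite hi.
- have [Z hZ] := zero_exists K; have [z hz] := lin_zero K Z; have [i hi] := lin_id K.
  exists K, Z, i, z; split => //; last exact: proj_zero.
  split.
  + by move=> a b; rewrite !hi.
  + by move=> y; rewrite hz; split => // _; exists y; rewrite hi.
  + by move=> y; exists 0; rewrite hz (hZ y).
Qed.

End Core.

Section GPtoGPc.
Context {R : pzRingType}.
Variables (P : int -> lmodType R) (d : forall i : int, {linear P i -> P (i + 1)}).
Hypotheses (pP : forall i, projective (P i))
  (ex : forall (i : int) (y : P (i + 1)), d (i + 1) y = 0 <-> exists x, d i x = y)
  (hom : forall (Q : lmodType R), projective Q ->
           forall (i : int) (f : {linear P (i + 1) -> Q}),
             (forall x, f (d i x) = 0) ->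
             exists g : {linear P (i + 1 + 1) -> Q}, forall y, g (d (i + 1) y) = f y).

Lemma TR {a b} : a = b -> exists c : {linear P a -> P b},
  [/\ injective c, surj c & forall y, d b (c y) = 0 <-> d a y = 0].
Proof.
move=> e; case: b / e; have [c hc] := lin_id (P a).
exists c; split.
- by move=> x y; rewrite !hc.
- by move=> y; exists y; rewrite hc.
- by move=> y; rewrite hc.
Qed.

Definition RP a := forall T : lmodType R, projective T -> forall (K0 : lmodType R) (k : {linear K0 -> P a}),
  injective k -> (forall y, (exists x, k x = y) <-> d a y = 0) ->
  forall h : {linear K0 -> T}, exists g : {linear P a -> T}, forall x, g (k x) = h x.

Lemma RP2 i : RP (i + 1 + 1).
Proof.
move=> T pT K0 k ki kk h.
have [f0 hf0] : exists f0 : {linear P (i + 1) -> K0}, forall y, k (f0 y) = d (i + 1) y.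
  by apply: factor_inj => // y; apply/kk; apply/ex; exists y.
have [f hf] := lin_comp f0 h.
have [g hg] : exists g : {linear P (i + 1 + 1) -> T}, forall y, g (d (i + 1) y) = f y.
  apply: hom => // x; rewrite hf.
  have -> : f0 (d i x) = 0 by apply: (inj0 ki); rewrite hf0; apply/ex; exists x.
  exact: linear0.
exists g => z; have : d (i + 1 + 1) (k z) = 0 by apply/kk; exists z.
move/ex => [y hy]; rewrite -hy hg hf; congr (h _); apply: (ki); by rewrite hf0.
Qed.

Lemma RPall a : RP a.
Proof.
have e : a - 1 - 1 + 1 + 1 = a by rewrite !subrK.
by rewrite -e; apply: RP2.
Qed.

Lemma EX k : exists j (dm : {linear P j -> P k}),
  (forall y, d k y = 0 <-> exists x, dm x = y) /\ forall x, (dm x = 0 <-> d j x = 0).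
Proof.
have e : k - 1 + 1 = k by rewrite subrK.
have [c [ci cs cd]] := TR e.
have [dm hdm] := lin_comp (d (k - 1)) c.
exists (k - 1), dm; split.
- move=> y; have [y' <-] := cs y; rewrite cd; split.
    by move/ex => [x hx]; exists x; rewrite hdm hx.
  by move=> [x]; rewrite hdm => /ci <-; apply/ex; exists x.
- move=> x; rewrite hdm; split; last by move->; rewrite linear0.
  by move/(inj0 ci).
Qed.

Definition Sk (K : lmodType R) := exists (k : int) (phi : {linear K -> P k}),
  injective phi /\ forall y, (exists x, phi x = y) <-> d k y = 0.

Lemma Sk_inv : GPinv Sk.
Proof.
move=> K [k [phi [phii phik]]].
have [j [dm [hdm hdm0]]] := EX k.
have [p hp] : exists p : {linear P j -> K}, forall x, phi (p x) = dm x.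
  by apply: factor_inj => // x; apply/phik; apply/hdm; exists x.
have [K' [kap [kapi kapk]]] := ker_exists p.
have sl : short_exact kap p.
  split => //; first by move=> y; split => /kapk.
  move=> z; have : d k (phi z) = 0 by apply/phik; exists z.
  move/hdm => [x hx]; exists x; apply: (phii); by rewrite hp.
have SK' : Sk K'.
  exists j, kap; split => // y; rewrite kapk -hdm0 -hp; split; first by move->; rewrite linear0.
  by move/(inj0 phii).
split.
- apply: (extvan_of_left sl (pP j)) => T pT h.
  apply: (@RPall j T pT _ kap kapi) => y; rewrite kapk -hdm0 -hp; split; first by move->; rewrite linear0.
  by move/(inj0 phii).
- by exists K', (P j), kap, p.
- have [C' [kap' [kapi' kapk']]] := ker_exists (d (k + 1)).
  have [q hq] : exists q : {linear P k -> C'}, forall y, kap' (q y) = d k y.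
    by apply: factor_inj => // y; apply/kapk'; apply/ex; exists y.
  exists (P k), C', phi, q; split => //.
  + split => //.
    * move=> y; rewrite phik; split; first by move=> e; rewrite -hq e linear0.
      by move=> e; apply: (inj0 kapi'); rewrite hq.
    * move=> z; have : d (k + 1) (kap' z) = 0 by apply/kapk'; exists z.
      by move/ex => [y hy]; exists y; apply: (kapi'); rewrite hq.
  + by exists (k + 1), kap'; split.
Qed.

End GPtoGPc.

Lemma GP_GPc {R : pzRingType} (G : lmodType R) : gorenstein_projective G -> GPc G.
Proof.
move=> [P [d [pP ex hom [iota [ii him]]]]].
exists (@Sk R P d); split; first exact: (@Sk_inv R P d pP ex hom).
exists (0 + 1), iota; split => // y; rewrite him; split; by move/ex.
Qed.

Section Cast.
Context {R : pzRingType}.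
Fact id_lin (X : lmodType R) : linear (fun x : X => x). Proof. by []. Qed.
Definition idL (X : lmodType R) : {linear X -> X} := mkL _ (id_lin X).
Definition castL {X Y : lmodType R} (e : X = Y) : {linear X -> Y} :=
  match e in _ = Y return {linear X -> Y} with erefl => idL X end.
Lemma castLK {X Y : lmodType R} (e : X = Y) x : castL (esym e) (castL e x) = x.
Proof. by case: Y / e. Qed.
Lemma castKL {X Y : lmodType R} (e : X = Y) y : castL e (castL (esym e) y) = y.
Proof. by move: y; case: Y / e. Qed.
Lemma castL_inj {X Y : lmodType R} (e : X = Y) : injective (castL e).
Proof. by move=> x y h; rewrite -(castLK e x) h castLK. Qed.
Lemma castL_surj {X Y : lmodType R} (e : X = Y) : surj (castL e).
Proof. by move=> y; exists (castL (esym e) y); rewrite castKL. Qed.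
End Cast.

Record ld {R : pzRingType} (C : lmodType R) := LD { lK : lmodType R; lQ : lmodType R;
  li : {linear lK -> lQ}; lp : {linear lQ -> C} }.
Record rd {R : pzRingType} (C : lmodType R) := RD { rQ : lmodType R; rC : lmodType R;
  ri : {linear C -> rQ}; rp : {linear rQ -> rC} }.
Arguments lK {R C}. Arguments lQ {R C}. Arguments li {R C}. Arguments lp {R C}.
Arguments rQ {R C}. Arguments rC {R C}. Arguments ri {R C}. Arguments rp {R C}.


Record ed {R : pzRingType} := ED { eA : lmodType R; eQ : lmodType R; eB : lmodType R;
  ei : {linear eA -> eQ}; ep : {linear eQ -> eB} }.
Arguments ed R : clear implicits.

Section GPctoGP.
Context {R : pzRingType}.
Variables (S : lmodType R -> Prop) (HS : GPinv S) (G : lmodType R) (SG : S G).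

Definition lok {C} (x : ld C) := [/\ projective (lQ x), short_exact (li x) (lp x) & S (lK x)].
Definition rok {C} (x : rd C) := [/\ projective (rQ x), short_exact (ri x) (rp x) & S (rC x)].

Lemma lex {C} : S C -> exists x : ld C, lok x.
Proof.
move=> /HS [_ [K' [Q [i [p [pq s sk]]]]] _].
by exists (@LD _ _ _ _ i p).
Qed.
Lemma rex {C} : S C -> exists x : rd C, rok x.
Proof.
move=> /HS [_ _ [Q [C' [i [p [pq s sk]]]]]].
by exists (@RD _ _ _ _ i p).
Qed.

Definition lch {C} (h : S C) : ld C := proj1_sig (constructive_indefinite_description _ (lex h)).
Lemma lchP {C} (h : S C) : lok (lch h).
Proof. exact: (proj2_sig (constructive_indefinite_description _ (lex h))). Qed.
Definition rch {C} (h : S C) : rd C := proj1_sig (constructive_indefinite_description _ (rex h)).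
Lemma rchP {C} (h : S C) : rok (rch h).
Proof. exact: (proj2_sig (constructive_indefinite_description _ (rex h))). Qed.
Lemma lchS {C} (h : S C) : S (lK (lch h)). Proof. by case: (lchP h). Qed.
Lemma rchS {C} (h : S C) : S (rC (rch h)). Proof. by case: (rchP h). Qed.

Definition state := {C : lmodType R | S C}.
Fixpoint lc (m : nat) : state :=
  match m with
  | 0 => exist _ G SG
  | m'.+1 => let s := lc m' in exist _ (lK (lch (proj2_sig s))) (lchS (proj2_sig s))
  end.
Fixpoint rc (m : nat) : state :=
  match m with
  | 0 => exist _ G SG
  | m'.+1 => let s := rc m' in exist _ (rC (rch (proj2_sig s))) (rchS (proj2_sig s))
  end.

Definition edL {C} (x : ld C) : ed R := @ED _ _ _ _ (li x) (lp x).
Definition edR {C} (x : rd C) : ed R := @ED _ _ _ _ (ri x) (rp x).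

Definition edge (i : int) : ed R :=
  match i with
  | Posz 0 => edL (lch (proj2_sig (lc 0)))
  | Posz m.+1 => edR (rch (proj2_sig (rc m)))
  | Negz m => edL (lch (proj2_sig (lc m.+1)))
  end.

Lemma edge_ok i : [/\ projective (eQ (edge i)), short_exact (ei (edge i)) (ep (edge i)),
  S (eA (edge i)) & S (eB (edge i))].
Proof.
case: i => [[|m]|m] /=.
- by case: (lchP (proj2_sig (lc 0))) => ? ? ?; split => //.
- by case: (rchP (proj2_sig (rc m))) => ? ? ?; split => //; exact: (proj2_sig (rc m)).
- by case: (lchP (proj2_sig (lc m.+1))) => ? ? ?; split => //; exact: (proj2_sig (lc m.+1)).
Qed.

Lemma jn i : eB (edge i) = eA (edge (i + 1)).
Proof.
case: i => [[|m]|[|m]].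
- by [].
- have e : Posz m.+1 + 1 = Posz m.+2 by rewrite -[in RHS]addn1 PoszD.
  by rewrite e.
- by [].
- have e : Negz m.+1 + 1 = Negz m by rewrite !NegzE -addn1 PoszD opprD subrK.
  by rewrite e.
Qed.

Definition PP (i : int) : lmodType R := eQ (edge i).
Fact dd_lin i : linear (fun x : PP i => ei (edge (i + 1)) (castL (jn i) (ep (edge i) x))).
Proof. by move=> a x y; rewrite !linearP. Qed.
Definition dd i : {linear PP i -> PP (i + 1)} := mkL _ (dd_lin i).
Lemma ddE i x : dd i x = ei (edge (i + 1)) (castL (jn i) (ep (edge i) x)).
Proof. by []. Qed.

Lemma im_dd i (y : PP (i + 1)) : (exists x, dd i x = y) <-> exists a, ei (edge (i + 1)) a = y.
Proof.
split; first by move=> [x <-]; exists (castL (jn i) (ep (edge i) x)).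
move=> [a <-]; have [b <-] := castL_surj (jn i) a.
have [_ [_ _ ps] _ _] := edge_ok i.
by have [x <-] := ps b; exists x.
Qed.

Lemma ker_dd i (y : PP i) : dd i y = 0 <-> ep (edge i) y = 0.
Proof.
rewrite ddE; split; last by move->; rewrite !linear0.
have [_ [ii _ _] _ _] := edge_ok (i + 1).
by move/(inj0 ii)/(inj0 (castL_inj _)).
Qed.

Lemma GPc_GP_aux : gorenstein_projective G.
Proof.
exists PP, dd; split.
- by move=> i; case: (edge_ok i).
- move=> i y; rewrite ker_dd im_dd.
  by have [_ [_ hk _] _ _] := edge_ok (i + 1).
- move=> Q pQ i f hf.
  have [_ [ii1 ik1 ps1] _ _] := edge_ok (i + 1).
  have hv a : f (ei (edge (i + 1)) a) = 0.
    by have [x <-] := (@im_dd i (ei (edge (i + 1)) a)).2 (ex_intro _ a erefl); apply: hf.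
  have [fb hfb] : exists fb : {linear eB (edge (i + 1)) -> Q}, forall y, fb (ep (edge (i + 1)) y) = f y.
    by apply: factor_surj => // y /ik1 [a <-]; apply: hv.
  have [h hh] := lin_comp (castL (esym (jn (i + 1)))) fb.
  have [_ s2 _ sb] := edge_ok (i + 1 + 1).
  have [ev _ _] := HS _ sb.
  have [g hg] := ev _ _ _ _ s2 Q pQ h.
  by exists g => y; rewrite ddE hg hh castLK hfb.
- have eq0 : G = eA (edge (0 + 1)) by [].
  have [io hio] := lin_comp (castL eq0) (ei (edge (0 + 1))).
  have [_ [ii1 _ _] _ _] := edge_ok (0 + 1).
  exists io; split.
  + by move=> x y; rewrite !hio => /ii1 /castL_inj.
  + move=> y; rewrite im_dd; split; first by move=> [g <-]; exists (castL eq0 g); rewrite hio.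
    by move=> [a <-]; have [g <-] := castL_surj eq0 a; exists g; rewrite hio.
Qed.

End GPctoGP.

Lemma GPc_GP {R : pzRingType} (G : lmodType R) : GPc G -> gorenstein_projective G.
Proof. by move=> [S [HS SG]]; exact: (@GPc_GP_aux R S HS G SG). Qed.

Lemma GP_iff {R : pzRingType} (G : lmodType R) : gorenstein_projective G <-> GPc G.
Proof. split; [exact: GP_GPc | exact: GPc_GP]. Qed.

Section Steps.
Context {R : pzRingType}.
Implicit Types U V W A X Y K M N G Q : lmodType R.

Lemma step1 {N' X M} {be : {linear N' -> X}} {ga : {linear X -> M}} :
  short_exact be ga -> GPc X ->
  exists (P0 N G : lmodType R) (io' : {linear N' -> P0}) (q : {linear P0 -> N})
    (uu : {linear M -> N}) (vv : {linear N -> G}),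
    [/\ projective P0, short_exact io' q, GPc G & short_exact uu vv].
Proof.
move=> sbg [S [HS SX]].
have [_ _ [P0 [G [io [pi [pP0 sio SG]]]]]] := HS _ SX.
case: (sbg) => bi bk bs; case: (sio) => ioi iok ios.
have [ib hib] := lin_comp be io.
have [N [q [qs qk]]] := coker_exists ib.
have [qi hqi] := lin_comp io q.
have [uu huu] : exists uu : {linear M -> N}, forall x, uu (ga x) = qi x.
  apply: factor_surj => // x /bk [n <-]; rewrite hqi; apply/qk; exists n; by rewrite hib.
have [vv hvv] : exists vv : {linear N -> G}, forall y, vv (q y) = pi y.
  apply: factor_surj => // y /qk [n <-]; rewrite hib; exact: ses_comp0 sio.
exists P0, N, G, ib, q, uu, vv; split => //.
- split => //; first by move=> x y; rewrite !hib => /ioi /bi.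
- by exists S.
- split.
  + apply: inj_lin => m; have [x <-] := bs m; rewrite huu hqi => /qk [n].
    by rewrite hib => /ioi <-; rewrite (ses_comp0 n sbg).
  + move=> c; have [y <-] := qs c; rewrite hvv; split.
    * move/iok => [x <-]; exists (ga x); by rewrite huu hqi.
    * move=> [m]; have [x <-] := bs m; rewrite huu hqi => e.
      have : q (y - io x) = 0 by rewrite linearB e subrr.
      move/qk => [n]; rewrite hib => e2.
      have -> : y = io (x + be n) by rewrite linearD e2 addrC subrK.
      exact: ses_comp0 sio.
  + by move=> g; have [y <-] := ios g; exists (q y); rewrite hvv.
Qed.

Lemma step2 {K Y1 Y0} {k : {linear K -> Y1}} {ga : {linear Y1 -> Y0}} :
  short_exact k ga -> GPc Y1 ->
  exists (Q0 B0 H0 : lmodType R) (j : {linear B0 -> Q0}) (p : {linear Q0 -> Y0})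
    (hu : {linear H0 -> B0}) (hv : {linear B0 -> K}),
    [/\ projective Q0, short_exact j p, GPc H0 & short_exact hu hv].
Proof.
move=> skg [S [HS SY]].
have [_ [H0 [Q0 [h [qq [pQ0 shq SH0]]]]] _] := HS _ SY.
case: (skg) => ki kk ks; case: (shq) => hi hk hs.
have [p hp] := lin_comp qq ga.
have [B0 [j [ji jk]]] := ker_exists p.
have [qj hqj] := lin_comp j qq.
have [hv hhv] : exists hv : {linear B0 -> K}, forall b, k (hv b) = qj b.
  apply: factor_inj => // b; apply/kk; rewrite hqj -hp; apply/jk; by exists b.
have [hu hhu] : exists hu : {linear H0 -> B0}, forall x, j (hu x) = h x.
  apply: factor_inj => // x; apply/jk; by rewrite hp (ses_comp0 x shq) linear0.
exists Q0, B0, H0, j, p, hu, hv; split => //.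
- split => //; first by move=> y; split => /jk.
  by move=> y; have [x <-] := ks y; have [z <-] := hs x; exists z; rewrite hp.
- by exists S.
- split.
  + by move=> x y e; apply: (hi); rewrite -!hhu e.
  + move=> b; split.
    * move=> e; have : qq (j b) = 0 by rewrite -hqj -hhv e linear0.
      move/hk => [x hx]; exists x; apply: (ji); by rewrite hhu.
    * move=> [x <-]; apply: (ki); by rewrite hhv hqj hhu (ses_comp0 x shq) linear0.
  + move=> x; have [y hy] := hs (k x).
    have : exists b, j b = y by apply/jk; rewrite hp hy (ses_comp0 x skg).
    move=> [b hb]; exists b; apply: (ki); by rewrite hhv hqj hb.
Qed.

Lemma pushout {K Y M N G} {k : {linear K -> Y}} {ga : {linear Y -> M}}
  {u : {linear K -> N}} {v : {linear N -> G}} :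
  short_exact k ga -> short_exact u v ->
  exists (X : lmodType R) (al : {linear Y -> X}) (be : {linear N -> X})
    (ga' : {linear X -> M}) (v' : {linear X -> G}), short_exact al v' /\ short_exact be ga'.
Proof.
move=> skg suv; case: (skg) => ki kk ks; case: (suv) => ui uk us.
have [nu hnu] := lin_opp u.
have [phi hphi] := lin_pair k nu.
have [X [pi [pis pik]]] := coker_exists phi.
have [l hl] := lin_inl Y N; have [r hr] := lin_inr Y N.
have [al hal] := lin_comp l pi; have [be hbe] := lin_comp r pi.
have [z0 hz0] := lin_zero N M; have [c1 hc1] := lin_copair ga z0.
have [ga' hga'] : exists ga' : {linear X -> M}, forall y, ga' (pi y) = c1 y.
  apply: factor_surj => // y /pik [z <-]; rewrite hc1 hz0 hphi /= addr0.
  exact: ses_comp0 skg.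
have [z1 hz1] := lin_zero Y G; have [c2 hc2] := lin_copair z1 v.
have [v' hv'] : exists v' : {linear X -> G}, forall y, v' (pi y) = c2 y.
  apply: factor_surj => // y /pik [z <-]; rewrite hc2 hz1 hphi hnu /= add0r linearN.
  by rewrite (ses_comp0 z suv) oppr0.
exists X, al, be, ga', v'; split.
- split.
  + apply: inj_lin => y; rewrite hal hl => /pik [z] /= ; rewrite hphi hnu => e.
    have e2 : - u z = 0 := congr1 snd e.
    have e1 : k z = y := congr1 fst e.
    have : u z = 0 by rewrite -[u z]opprK e2 oppr0.
    by move/(inj0 ui) => z0'; rewrite -e1 z0' linear0.
  + move=> c; have [[y n] <-] := pis c; rewrite hv' hc2 hz1 /= add0r; split.
    * move/uk => [z hz]; exists (y + k z); rewrite hal hl.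
      apply/eqP; rewrite -subr_eq0 -linearB; apply/eqP/pik; exists z.
      by rewrite hphi hnu hz pair_subE sub0r addrAC subrr add0r.
    * move=> [y' e]; have := congr1 v' e; rewrite hal hl !hv' !hc2 !hz1 /= linear0 !add0r.
      by move<-.
  + by move=> g; have [n <-] := us g; exists (pi (r n)); rewrite hv' hc2 hz1 hr /= add0r.
- split.
  + apply: inj_lin => n; rewrite hbe hr => /pik [z] /= ; rewrite hphi hnu => e.
    have e1 : k z = 0 := congr1 fst e.
    have e2 : - u z = n := congr1 snd e.
    by move: (inj0 ki e1) => z0'; rewrite -e2 z0' linear0 oppr0.
  + move=> c; have [[y n] <-] := pis c; rewrite hga' hc1 hz0 /= addr0; split.
    * move/kk => [z hz]; exists (n + u z); rewrite hbe hr.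
      apply/eqP; rewrite -subr_eq0 -linearB; apply/eqP/pik; exists (- z).
      by rewrite hphi hnu !linearN opprK hz pair_subE sub0r addrAC subrr add0r.
    * move=> [n' e]; have := congr1 ga' e; rewrite hbe hr !hga' !hc1 !hz0 /= linear0 !addr0.
      by move<-.
  + by move=> m; have [y <-] := ks m; exists (pi (l y)); rewrite hga' hc1 hz0 hl /= addr0.
Qed.

Lemma pullback {Y2 Y1 K B0 H0 : lmodType R} (e2 : {linear Y2 -> Y1}) (kk : {linear K -> Y1})
  (hu : {linear H0 -> B0}) (hv : {linear B0 -> K}) :
  injective kk -> (forall y, exists z, kk z = e2 y) -> (forall z, exists y, e2 y = kk z) ->
  short_exact hu hv ->
  exists (E : lmodType R) (pr1 : {linear E -> Y2}) (pr2 : {linear E -> B0}),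
   [/\ (forall y b, e2 y = kk (hv b) -> exists x, pr1 x = y /\ pr2 x = b),
       (forall x, e2 (pr1 x) = kk (hv (pr2 x))),
       (forall x x', pr1 x = pr1 x' -> pr2 x = pr2 x' -> x = x'),
       (forall W (f1 : {linear W -> Y2}) (f2 : {linear W -> B0}),
          (forall w, e2 (f1 w) = kk (hv (f2 w))) ->
          exists g : {linear W -> E}, forall w, pr1 (g w) = f1 w /\ pr2 (g w) = f2 w) &
       exists hE : {linear H0 -> E}, short_exact hE pr1].
Proof.
move=> kki land onto shv; case: (shv) => hui huk hus.
have [c1 hc1] := lin_comp hv kk.
have [f1 hf1] := lin_fst Y2 B0; have [f2 hf2] := lin_snd Y2 B0.
have [m1 hm1] := lin_comp f1 e2; have [m2 hm2] := lin_comp f2 c1.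
have [nm2 hnm2] := lin_opp m2; have [mm hmm] := lin_add m1 nm2.
have [E [iE [iEi iEk]]] := ker_exists mm.
have [pr1 hpr1] := lin_comp iE f1; have [pr2 hpr2] := lin_comp iE f2.
have key y b : mm (y, b) = 0 <-> e2 y = kk (hv b).
  rewrite hmm hm1 hnm2 hm2 hf1 hf2 hc1 /=; split; first by move/eqP; rewrite subr_eq0 => /eqP.
  by move->; rewrite subrr.
have rel x : e2 (pr1 x) = kk (hv (pr2 x)).
  rewrite hpr1 hpr2 hf1 hf2; apply/key; rewrite -surjective_pairing; apply/iEk; by exists x.
have jinj x x' : pr1 x = pr1 x' -> pr2 x = pr2 x' -> x = x'.
  rewrite !hpr1 !hpr2 !hf1 !hf2 => e1 e2'; apply: (iEi).
  by move: e1 e2'; case: (iE x) => a b; case: (iE x') => c d /= -> ->.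
have univ : forall W (g1 : {linear W -> Y2}) (g2 : {linear W -> B0}),
    (forall w, e2 (g1 w) = kk (hv (g2 w))) ->
    exists g : {linear W -> E}, forall w, pr1 (g w) = g1 w /\ pr2 (g w) = g2 w.
  move=> W g1 g2 hg; have [gp hgp] := lin_pair g1 g2.
  have [g hg'] : exists g : {linear W -> E}, forall w, iE (g w) = gp w.
    by apply: factor_inj => // w; apply/iEk; rewrite hgp; apply/key.
  by exists g => w; rewrite hpr1 hpr2 hf1 hf2 hg' hgp.
have elem y b : e2 y = kk (hv b) -> exists x, pr1 x = y /\ pr2 x = b.
  move=> e; have [x hx] : exists x, iE x = (y, b) by apply/iEk; apply/key.
  by exists x; rewrite hpr1 hpr2 hf1 hf2 hx.
exists E, pr1, pr2; split => //.
have [z hz] := lin_zero H0 Y2.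
have hz0 w : e2 (z w) = kk (hv (hu w)) by rewrite hz linear0 (ses_comp0 w shv) linear0.
have [hE hhE] := univ _ z hu hz0.
exists hE; split.
- by move=> x x' e; apply: (hui); rewrite -(hhE x).2 -(hhE x').2 e.
- move=> x; split.
  + move=> e; have := rel x; rewrite e linear0 => /esym e'.
    have := inj0 kki e'; move/huk => [h hh]; exists h; apply: jinj.
    * by rewrite (hhE h).1 hz e.
    * by rewrite (hhE h).2 hh.
  + by move=> [h <-]; rewrite (hhE h).1 hz.
- move=> y; have [z' hz'] := land y; have [b hb] := hus z'.
  have : e2 y = kk (hv b) by rewrite hb hz'.
  by case/elem => x [? _]; exists x.
Qed.

End Steps.

Definition Zb {R : pzRingType} (N P0 : lmodType R) : nat -> lmodType R :=
  fun i => match i with 0 => N | _ => P0 end.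
Definition fZb {R : pzRingType} {N P0 : lmodType R} (q : {linear P0 -> N}) :
  forall i, {linear Zb N P0 i -> Zb N P0 i.-1} :=
  fun i => match i as i0 return {linear Zb N P0 i0 -> Zb N P0 i0.-1} with
  | 0 => idL N | 1 => q | _.+2 => idL P0 end.

Definition Zsp {R : pzRingType} (N P0 : lmodType R) (Z' : nat -> lmodType R) : nat -> lmodType R :=
  fun i => match i with 0 => N | 1 => P0 | k.+2 => Z' k.+1 end.
Definition fZsp {R : pzRingType} {N P0 : lmodType R} {Z' : nat -> lmodType R}
  (q : {linear P0 -> N}) (c2 : {linear Z' 1%N -> P0}) (f' : forall i, {linear Z' i -> Z' i.-1}) :
  forall i, {linear Zsp N P0 Z' i -> Zsp N P0 Z' i.-1} :=
  fun i => match i as i0 return {linear Zsp N P0 Z' i0 -> Zsp N P0 Z' i0.-1} with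
  | 0 => idL N | 1 => q | 2 => c2 | k.+3 => f' k.+2 end.

Definition Y1sp {R : pzRingType} (K : lmodType R) (Y : nat -> lmodType R) : nat -> lmodType R :=
  fun i => match i with 0 => K | k.+1 => Y k.+2 end.
Definition eY1sp {R : pzRingType} {K : lmodType R} {Y : nat -> lmodType R}
  (e2' : {linear Y 2%N -> K}) (e : forall i, {linear Y i -> Y i.-1}) :
  forall i, {linear Y1sp K Y i -> Y1sp K Y i.-1} :=
  fun i => match i as i0 return {linear Y1sp K Y i0 -> Y1sp K Y i0.-1} with
  | 0 => idL K | 1 => e2' | k.+2 => e k.+3 end.

Definition Wb {R : pzRingType} (Q0 B0 : lmodType R) : nat -> lmodType R :=
  fun i => match i with 0 => Q0 | _ => B0 end.
Definition fWb {R : pzRingType} {Q0 B0 : lmodType R} (j : {linear B0 -> Q0}) :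
  forall i, {linear Wb Q0 B0 i -> Wb Q0 B0 i.-1} :=
  fun i => match i as i0 return {linear Wb Q0 B0 i0 -> Wb Q0 B0 i0.-1} with
  | 0 => idL Q0 | 1 => j | _.+2 => idL B0 end.

Definition Wsp {R : pzRingType} (Q0 : lmodType R) (W' : nat -> lmodType R) : nat -> lmodType R :=
  fun i => match i with 0 => Q0 | k.+1 => W' k end.
Definition fWsp {R : pzRingType} {Q0 : lmodType R} {W' : nat -> lmodType R}
  (c1 : {linear W' 0%N -> Q0}) (f' : forall i, {linear W' i -> W' i.-1}) :
  forall i, {linear Wsp Q0 W' i -> Wsp Q0 W' i.-1} :=
  fun i => match i as i0 return {linear Wsp Q0 W' i0 -> Wsp Q0 W' i0.-1} with
  | 0 => idL Q0 | 1 => c1 | k.+2 => f' k.+1 end.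

Definition Y2sp {R : pzRingType} (B0 E : lmodType R) (Y : nat -> lmodType R) : nat -> lmodType R :=
  fun i => match i with 0 => B0 | 1 => E | k.+2 => Y k.+3 end.
Definition eY2sp {R : pzRingType} {B0 E : lmodType R} {Y : nat -> lmodType R}
  (pr2 : {linear E -> B0}) (e3' : {linear Y 3%N -> E}) (e : forall i, {linear Y i -> Y i.-1}) :
  forall i, {linear Y2sp B0 E Y i -> Y2sp B0 E Y i.-1} :=
  fun i => match i as i0 return {linear Y2sp B0 E Y i0 -> Y2sp B0 E Y i0.-1} with
  | 0 => idL B0 | 1 => pr2 | 2 => e3' | k.+3 => e k.+4 end.

Lemma part1 {R : pzRingType} (m : nat) : forall (A : lmodType R) (Y : nat -> lmodType R)
  (e : forall i, {linear Y i -> Y i.-1}) (a : {linear A -> Y m.+1}),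
  lexact (@gorenstein_projective R) m.+1 A Y e a ->
  exists (Z : nat -> lmodType R) (f : forall i, {linear Z i -> Z i.-1}) (b : {linear A -> Z m.+1}),
    lexact (@projective R) m.+1 A Z f b /\
    exists (G : lmodType R) (u : {linear Y 0%N -> Z 0%N}) (v : {linear Z 0%N -> G}),
      gorenstein_projective G /\ short_exact u v.
Proof.
elim: m => [|m IH] A Y e a [ai ak amid es gp].
- have sae : short_exact a (e 1%N) by split.
  have gY : GPc (Y 1%N) by apply: GP_GPc; apply: gp.
  have [P0 [N [G [io [q [uu [vv [pP [ioi iok qs] gG suv]]]]]]]] := step1 sae gY.
  exists (Zb N P0), (fZb q), io; split.
  + split => //.
    * by move=> i /andP [h1 h2]; case: i h1 h2 => [|[|i]].
    * by move=> [|[|i]].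
  + by exists G, uu, vv; split => //; apply: GPc_GP.
- have [K [kk [kki kkk]]] := ker_exists (e 1%N).
  have am1 := amid 1%N erefl.
  have [e2' he2'] : exists e2' : {linear Y 2%N -> K}, forall y, kk (e2' y) = e 2%N y.
    by apply: factor_inj => // y; apply/kkk; apply/am1; exists y.
  have E1 i (y : Y1sp K Y i.+1) : eY1sp e2' e i.+1 y = 0 <-> e i.+2 y = 0.
    case: i y => [|i] y //=; split; first by move=> h; rewrite -he2' h linear0.
    by move=> h; apply: (inj0 kki); rewrite he2'.
  have L' : lexact (@gorenstein_projective R) m.+1 A (Y1sp K Y) (eY1sp e2' e) a.
    split => //.
    + by move=> y; rewrite E1; apply: ak.
    + by move=> [|i] // /andP [_ h] y; rewrite E1; exact: (amid i.+2 h y).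
    + move=> z; have : e 1%N (kk z) = 0 by apply/kkk; exists z.
      by move/am1 => [y hy]; exists y; apply: (kki); rewrite he2'.
    + by move=> [|i] // /andP [_ h]; exact: (gp i.+2 h).
  have [Z' [f' [b' [[bi bk bmid fs pz] [G [u [v [gG suv]]]]]]]] := IH _ _ _ _ L'.
  have skk : short_exact kk (e 1%N) by split => // y; split => /kkk.
  have [X [al [be [ga' [v' [sal sbe]]]]]] := pushout skk suv.
  have gX : GPc X := GPc_ext sal (GP_GPc _ (gp 1%N erefl)) (GP_GPc _ gG).
  have [P0 [N [G2 [io [q [uu [vv [pP [ioi iok qs] gG2 suv2]]]]]]]] := step1 sbe gX.
  have [c2 hc2] := lin_comp (f' 1%N) io.
  have F1 i (y : Zsp N P0 Z' i.+2) : fZsp q c2 f' i.+2 y = 0 <-> f' i.+1 y = 0.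
    case: i y => [|i] y //=; rewrite hc2; split; last by move->; rewrite linear0.
    exact: inj0 ioi.
  exists (Zsp N P0 Z'), (fZsp q c2 f'), b'; split.
  + split => //.
    * by move=> y; rewrite F1; apply: bk.
    * move=> [|[|i]] // /andP [_ h] y.
      - rewrite /= iok; split.
        + by move=> [x <-]; have [z <-] := fs x; exists z; rewrite hc2.
        + by move=> [z <-]; exists (f' 1%N z); rewrite hc2.
      - by rewrite F1; exact: (bmid i.+1 h y).
    * by move=> [|[|i]] // /andP [_ h]; exact: (pz i.+1 h).
  + by exists G2, uu, vv; split => //; apply: GPc_GP.
Qed.

Lemma part2 {R : pzRingType} (m : nat) : forall (A : lmodType R) (Y : nat -> lmodType R)
  (e : forall i, {linear Y i -> Y i.-1}) (a : {linear A -> Y m.+1}),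
  lexact (@gorenstein_projective R) m.+1 A Y e a ->
  exists (W : nat -> lmodType R) (f : forall i, {linear W i -> W i.-1}) (p : {linear W 0%N -> Y 0%N}),
    rexact (@projective R) m.+1 (Y 0%N) W f p /\
    exists (H : lmodType R) (u : {linear H -> W m.+1}) (v : {linear W m.+1 -> A}),
      gorenstein_projective H /\ short_exact u v.
Proof.
elim: m => [|m IH] A Y e a [ai ak amid es gp].
- have sae : short_exact a (e 1%N) by split.
  have gY : GPc (Y 1%N) by apply: GP_GPc; apply: gp.
  have [Q0 [B0 [H0 [j [p [hu [hv [pQ [ji jk ps] gH shv]]]]]]]] := step2 sae gY.
  exists (Wb Q0 B0), (fWb j), p; split.
  + split => //.
    * by move=> i /andP [h1 h2]; case: i h1 h2 => [|[|i]].
    * by move=> [|i].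
  + by exists H0, hu, hv; split => //; apply: GPc_GP.
- have [K [kk [kki kkk]]] := ker_exists (e 1%N).
  have am1 := amid 1%N erefl.
  have skk : short_exact kk (e 1%N) by split => // y; split => /kkk.
  have gY1 : GPc (Y 1%N) := GP_GPc _ (gp 1%N erefl).
  have [Q0 [B0 [H0 [j [p [hu [hv [pQ [ji jk ps] gH shv]]]]]]]] := step2 skk gY1.
  have land y : exists z, kk z = e 2%N y by apply/kkk; apply/am1; exists y.
  have onto z : exists y, e 2%N y = kk z.
    have : e 1%N (kk z) = 0 by apply/kkk; exists z.
    by move/am1.
  have [E [pr1 [pr2 [elem rel jinj univ [hE shE]]]]] := pullback (e 2%N) kk hu hv kki land onto shv.
  have gE : GPc E := GPc_ext shE gH (GP_GPc _ (gp 2%N erefl)).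
  have spr2 : surj pr2.
    move=> b; have [y hy] := onto (hv b).
    by have [x [_ hx]] := elem y b hy; exists x.
  have pr2E x : pr2 x = 0 -> e 2%N (pr1 x) = 0 by move=> h; rewrite rel h !linear0.
  suff [e'' [a'' L'']] : exists (e'' : forall i, {linear Y2sp B0 E Y i -> Y2sp B0 E Y i.-1})
      (a'' : {linear A -> Y2sp B0 E Y m.+1}), lexact (@gorenstein_projective R) m.+1 A (Y2sp B0 E Y) e'' a''.
    have [W' [f' [p' [[fi fmid pk ps' pw] [H [u [v [gH' suv]]]]]]]] := IH _ _ _ _ L''.
    have [c1 hc1] := lin_comp p' j.
    exists (Wsp Q0 W'), (fWsp c1 f'), p; split.
    + split => //.
      * move=> [|[|i]] // /andP [_ h] y.
        - rewrite /= hc1; split.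
          + by move/(inj0 ji)/pk.
          + by move=> [z <-]; rewrite ((pk _).2 (ex_intro _ z erefl)) linear0.
        - exact: (fmid i.+1 h y).
      * move=> y; rewrite jk; split.
        - by move=> [b <-]; have [z <-] := ps' b; exists z; rewrite hc1.
        - by move=> [z <-]; exists (p' z); rewrite hc1.
      * by move=> [|i] // h; exact: (pw i h).
    + by exists H, u, v.
  clear IH; case: m a ai ak amid gp => [|m'] a ai ak amid gp.
  - have [z3 hz3] := lin_zero (Y 3%N) E.
    have [z0 hz0] := lin_zero A B0.
    have haE w : e 2%N (a w) = kk (hv (z0 w)).
      by rewrite hz0 !linear0; apply/ak; exists w.
    have [aE haE'] := univ _ a z0 haE.
    exists (eY2sp pr2 z3 e), aE; split => //.
    + by move=> x y exy; apply: (ai); rewrite -(haE' x).1 -(haE' y).1 exy.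
    + move=> y /=; split.
      * move=> h0; have /ak [x hx] := pr2E _ h0.
        exists x; apply: jinj; first by rewrite (haE' x).1.
        by rewrite (haE' x).2 hz0 h0.
      * by move=> [x <-]; rewrite (haE' x).2 hz0.
    + by move=> i /andP [h1 h2]; case: i h1 h2 => [|[|i]].
    + by move=> [|[|i]] // _; apply: GPc_GP.
  - have [z0 hz0] := lin_zero (Y 3%N) B0.
    have am2 := amid 2%N erefl.
    have he3 w : e 2%N (e 3%N w) = kk (hv (z0 w)).
      by rewrite hz0 !linear0; apply/am2; exists w.
    have [e3' he3'] := univ _ (e 3%N) z0 he3.
    have E2 i (y : Y2sp B0 E Y i.+2) : eY2sp pr2 e3' e i.+2 y = 0 <-> e i.+3 y = 0.
      case: i y => [|i] y //=; split.
      * by move=> h; rewrite -(he3' y).1 h linear0.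
      * move=> h; apply: jinj; first by rewrite (he3' y).1 h linear0.
        by rewrite (he3' y).2 hz0 linear0.
    exists (eY2sp pr2 e3' e), a; split => //.
    + by move=> y; rewrite E2; apply: ak.
    + move=> [|[|i]] // /andP [_ h] y.
      * rewrite /=; split.
        - move=> h0; have /am2 [z hz] := pr2E _ h0.
          exists z; apply: jinj; first by rewrite (he3' z).1.
          by rewrite (he3' z).2 hz0 h0.
        - by move=> [z <-]; rewrite (he3' z).2 hz0.
      * by rewrite E2; exact: (amid i.+3 h y).
    + move=> [|[|i]] // /andP [_ h]; first by apply: GPc_GP.
      exact: (gp i.+3 h).
Qed.

Theorem theorem2p4 (R : pzRingType) (n : nat) (A : lmodType R)
  (Y : nat -> lmodType R) (e : forall i, {linear Y i -> Y i.-1}) (a : {linear A -> Y n}) :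
  (0 < n)%N ->
  @lexact R (@gorenstein_projective R) n A Y e a ->
  (* (1) ; here M = Y 0 *)
  (exists (Z : nat -> lmodType R) (f : forall i, {linear Z i -> Z i.-1}) (b : {linear A -> Z n}),
      @lexact R (@projective R) n A Z f b /\
      exists (G : lmodType R) (u : {linear Y 0%N -> Z 0%N}) (v : {linear Z 0%N -> G}),
        gorenstein_projective G /\ @short_exact R _ _ _ u v) /\
  (forall X : lmodType R, syzygy n X <-> gorenstein_syzygy n X) /\
  (* (2) ; here B = W n *)
  (exists (W : nat -> lmodType R) (f : forall i, {linear W i -> W i.-1}) (p : {linear W 0%N -> Y 0%N}),
      @rexact R (@projective R) n (Y 0%N) W f p /\
      exists (H : lmodType R) (u : {linear H -> W n}) (v : {linear W n -> A}),
        gorenstein_projective H /\ @short_exact R _ _ _ u v).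
Proof.
move=> hn L; case: n a hn L => [//|m] a _ L.
split; first exact: part1 L.
split; last exact: part2 L.
move=> X; split.
- move=> [Y' [e' [a' [h1 h2 h3 h4 h5]]]]; exists Y', e', a'; split => // i hi.
  by apply: GPc_GP; apply: proj_GPc; apply: h5.
- by move=> [Y' [e' [a' L']]]; have [Z [f [b [L2 _]]]] := @part1 _ m _ _ _ _ L'; exists Z, f, b.
Qed.
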